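(* Let $r\ge 3$. There exists an uncountable set of $r$-tuples $(\alpha_1,\dots,\alpha_r)\in\mathbb{R}^r$, each such that $1,\alpha_1,\dots,\alpha_r$ are linearly independent over $\mathbb{Q}$, with the following property: there is a three-dimensional sublattice $\Lambda(\alpha_1,\dots,\alpha_r)$ of $\mathbb{Z}^{r+1}$ such that the best approximations $m_\nu$ (in the sense of linear form) for $(\alpha_1,\dots,\alpha_r)$ lie in $\Lambda(\alpha_1,\dots,\alpha_r)$ for all sufficiently large $\nu$.
   Context: For real $\alpha_1,\dots,\alpha_r$ and $m=(m_0,\dots,m_r)\in\mathbb{Z}^{r+1}\setminus\{0\}$ put $\zeta(m)=|m_0+m_1\alpha_1+\dots+m_r\alpha_r|$ and $M=\max_{0\le j\le r}|m_j|$. A point $m\in\mathbb{Z}^{r+1}\setminus\{0\}$ is a best approximation (in the sense of linear form) if $\zeta(m)=\min\{\zeta(n): n\in\mathbb{Z}^{r+1}\setminus\{0\},\ \max_j|n_j|\le M\}$. The best approximations are ordered as $m_1,m_2,\dots$ so that $\zeta(m_1)>\zeta(m_2)>\dots$ and $M_1<M_2<\dots$, where $M_\nu=\max_j|m_{j,\nu}|$. *)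

(* Defs.v *)
From HB Require Import structures.
From mathcomp Require Import all_boot all_order all_algebra.
From mathcomp Require Import boolp classical_sets cardinality reals.
Set Implicit Arguments. Unset Strict Implicit. Unset Printing Implicit Defensive.
Import Order.TTheory GRing.Theory Num.Theory.
Local Open Scope ring_scope.
Local Open Scope classical_set_scope.

(* A point m = (m_0, ..., m_r) of Z^{r+1} is a function 'I_r.+1 -> int;
   coordinate 0 is m_0, coordinate (lift ord0 j) is m_{j+1}.
   The tuple (alpha_1,...,alpha_r) is alpha : 'I_r -> R. *)

Definition zeta (R : realType) (r : nat) (alpha : 'I_r -> R) (m : 'I_r.+1 -> int) : R :=
  `| (m ord0)%:~R + \sum_(j < r) (m (lift ord0 j))%:~R * alpha j |.

Definition supnorm (r : nat) (m : 'I_r.+1 -> int) : nat :=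
  (\max_(j < r.+1) `|m j|)%N.

Definition nonzero_vec (r : nat) (m : 'I_r.+1 -> int) : Prop := exists j, m j <> 0.

Definition best_approx (R : realType) (r : nat) (alpha : 'I_r -> R) (m : 'I_r.+1 -> int) : Prop :=
  nonzero_vec m /\
  forall n : 'I_r.+1 -> int, nonzero_vec n -> (supnorm n <= supnorm m)%N ->
    zeta alpha m <= zeta alpha n.

Definition Q_lin_indep1 (R : realType) (r : nat) (alpha : 'I_r -> R) : Prop :=
  forall q : 'I_r.+1 -> rat,
    ratr (q ord0) + \sum_(j < r) ratr (q (lift ord0 j)) * alpha j = 0 ->
    forall i, q i = 0.

Definition Z_lin_indep (r k : nat) (b : 'I_k -> 'I_r.+1 -> int) : Prop :=
  forall a : 'I_k -> int, (forall i, \sum_(l < k) a l * b l i = 0) -> forall l, a l = 0.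

Definition in_lattice (r k : nat) (b : 'I_k -> 'I_r.+1 -> int) (m : 'I_r.+1 -> int) : Prop :=
  exists a : 'I_k -> int, forall i, m i = \sum_(l < k) a l * b l i.

(* Main.v *)
Require Import Defs.
From mathcomp Require Import all_boot all_order all_algebra.
From mathcomp Require Import boolp classical_sets cardinality reals.
From mathcomp Require Import zify lra ring.
Import Order.TTheory GRing.Theory Num.Theory.

Set Implicit Arguments. Unset Strict Implicit. Unset Printing Implicit Defensive.

Fixpoint ee (p : nat) (b : nat -> bool) (k : nat) : nat :=
  if k is k'.+1 then (2 * ee p b k' + p + 6 + b k')%N else 0%N.

Lemma eeS p b k : ee p b k.+1 = (2 * ee p b k + p + 6 + b k)%N.
Proof. by []. Qed.

Lemma ee_lt p b k : (ee p b k < ee p b k.+1)%N.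
Proof. rewrite eeS; lia. Qed.

Lemma ee_mono p b k l : (k <= l)%N -> (ee p b k <= ee p b l)%N.
Proof.
move=> /subnKC <-; elim: (l - k)%N => [|d IH]; first by rewrite addn0.
by rewrite addnS (leq_trans IH) // ltnW // ee_lt.
Qed.

Lemma ee_ge p b k : (k <= ee p b k)%N.
Proof. elim: k => // k IH; rewrite eeS; lia. Qed.

Lemma arith_key (P mu X Y Z B : nat) : (mu < X)%N -> (P < Y)%N -> (4 * Y <= Z)%N -> (1 <= B)%N ->
  (4 * P * mu * X < X * X * Z * B)%N.
Proof.
move=> h1 h2 h3 h4.
have X0 : (0 < X)%N by case: X h1 => //.
have e1 : (P * mu < Y * X)%N by apply: ltn_mul.
have e2 : (4 * P * mu * X < 4 * Y * X * X)%N.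
  by rewrite -!mulnA ltn_pmul2l // mulnA [(Y * (X * X))%N]mulnA ltn_pmul2r.
apply: (leq_trans e2).
have e3 : (4 * Y * X * X <= Z * X * X)%N by rewrite !leq_mul2r h3 !orbT.
apply: (leq_trans e3).
rewrite [(X * X * Z)%N]mulnC mulnA -{1}[(Z * X * X)%N]muln1 leq_mul2l h4 orbT //.
Qed.

Lemma ee_key p b s mu : (mu < 2 ^ ee p b s)%N ->
  (4 * p.+3 * mu * 2 ^ ee p b s < 2 ^ ee p b s.+1)%N.
Proof.
move=> hmu.
have -> : (2 ^ ee p b s.+1 = 2 ^ ee p b s * 2 ^ ee p b s * (2 ^ p * 2 ^ 6) * 2 ^ b s)%N.
  by rewrite eeS !expnD expn0 muln1 !mulnA.
apply: (@arith_key _ _ _ (2 ^ p.+3)%N) => //; first by apply: ltn_expl.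
  by rewrite -expnD -[4%N]/(2^2)%N -expnD leq_exp2l; lia.
by rewrite expn_gt0.
Qed.

Definition colN (p i : nat) : nat :=
  if (i.-1 %% p.+2 == 0)%N then nat_of_bool (odd (i.-1 %/ p.+2)) else (i.-1 %% p.+2).+1.

Lemma colN_lt p i : (colN p i < p.+3)%N.
Proof.
rewrite /colN; case: ifP => _; first by case: odd.
by rewrite ltnS ltn_pmod.
Qed.

Lemma colN_at p q t : (t < p.+2)%N ->
  colN p (q * p.+2 + t).+1 = if t == 0%N then nat_of_bool (odd q) else t.+1.
Proof.
move=> ht; rewrite /colN /= modnMDl divnMDl // modn_small // divn_small // addn0.
by [].
Qed.

Lemma colN_P1 p j a : (j < p.+3)%N -> exists i, (a < i)%N /\ colN p i = j.
Proof.
move=> hj.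
case: j hj => [|[|j]] hj.
- exists ((a.*2.+2) * p.+2 + 0).+1; rewrite colN_at //; split; last by rewrite /= odd_double.
  nia.
- exists ((a.*2.+1) * p.+2 + 0).+1; rewrite colN_at //; split; last by rewrite /= odd_double.
  nia.
- exists ((a.*2.+2) * p.+2 + j.+1).+1; rewrite colN_at //; split=> //; nia.
Qed.

Lemma colN_01 p i : (0 < i)%N -> (colN p i <= 1)%N -> exists q, i = (q * p.+2).+1 /\ colN p i = odd q.
Proof.
rewrite /colN; case: ifP => [/eqP h0|/negbT h0 _ h]; last by exfalso; lia.
move=> hi _; exists (i.-1 %/ p.+2); split=> //.
by rewrite -[i]prednK // {1}(divn_eq i.-1 p.+2) h0 addn0.
Qed.

Lemma colN_P2 p a bb i1 i2 j : (0 < a)%N -> (a <= i1 <= bb)%N -> (a <= i2 <= bb)%N ->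
  colN p i1 = 0%N -> colN p i2 = 1%N -> (2 <= j < p.+3)%N ->
  exists i, (a < i < bb)%N /\ colN p i = j.
Proof.
move=> ha /andP[h1 h1'] /andP[h2 h2'] c1 c2 /andP[hj hj'].
have [q1 [e1 o1]] := colN_01 (leq_trans ha h1) (leqW (eq_leq c1)).
have [q2 [e2 o2]] := colN_01 (leq_trans ha h2) (eq_leq c2).
have hq : q1 != q2 by apply/eqP => E; move: o1 o2; rewrite c1 c2 E => <-.
clear c1 c2 o1 o2.
wlog lt12 : q1 q2 i1 i2 h1 h1' h2 h2' e1 e2 hq / (q1 < q2)%N.
  move=> W; case: (ltngtP q1 q2) => [l|l|E]; last by rewrite E eqxx in hq.
  - exact: (W q1 q2 i1 i2).
  - apply: (W q2 q1 i2 i1) => //; by rewrite eq_sym.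
exists ((q1 * p.+2 + j.-1).+1); rewrite colN_at; last by lia.
split; last by case: j hj hj' => [|[|j]].
have : (q1.+1 * p.+2 <= q2 * p.+2)%N by rewrite leq_mul2r.
rewrite mulSn. nia.
Qed.

Unset Implicit Arguments.
Local Open Scope ring_scope.

Definition colI p i : 'I_p.+3 := inord (colN p i).
Lemma colI_val p i : (colI p i : nat) = colN p i.
Proof. by rewrite inordK // colN_lt. Qed.

Definition pw (R : realType) p b k : R := 2 ^+ ee p b k.

Fixpoint Ap (R : realType) p (b : nat -> bool) (c : 'I_p.+3) (k : nat) : R :=
  if k is k'.+1 then Ap R p b c k' + (colI p k'.+1 == c)%:R / pw R p b k'.+1 else 0.

Definition alpha (R : realType) p b : 'I_p.+3 -> R := fun c => sup (range (Ap R p b c)).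

Lemma pw_gt0 (R : realType) p b k : 0 < pw R p b k.
Proof. by rewrite /pw exprn_gt0. Qed.

Lemma pwS (R : realType) p b k : pw R p b k.+1 = pw R p b k * 2 ^+ (ee p b k.+1 - ee p b k)%N.
Proof. by rewrite /pw -exprD subnKC // ltnW // ee_lt. Qed.

Lemma pw2 (R : realType) p b k : 2 * pw R p b k <= pw R p b k.+1.
Proof.
rewrite pwS mulrC ler_pM2l ?pw_gt0 //.
have h : (1 <= ee p b k.+1 - ee p b k)%N by rewrite subn_gt0 ee_lt.
by rewrite -[X in X <= _]expr1 ler_eXn2l // ltr1n.
Qed.

Lemma inv_pw2 (R : realType) p b k : 2 / pw R p b k.+1 <= 1 / pw R p b k.
Proof.
have h0 := pw_gt0 R p b k; have h1 := pw_gt0 R p b k.+1; have h2 := pw2 R p b k.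
rewrite ler_pdivrMr // mulrC mulrA ler_pdivlMr //; lra.
Qed.

Lemma Ap_step_ge (R : realType) p b c k : Ap R p b c k <= Ap R p b c k.+1.
Proof.
rewrite /= lerDl divr_ge0 ?ler0n //; exact/ltW/pw_gt0.
Qed.

Lemma Ap_mono (R : realType) p b c k l : (k <= l)%N -> Ap R p b c k <= Ap R p b c l.
Proof.
move=> /subnKC <-; elim: (l - k)%N => [|d IH]; first by rewrite addn0.
by rewrite addnS (le_trans IH) // Ap_step_ge.
Qed.

Lemma Ap_ge0 (R : realType) p b c k : 0 <= Ap R p b c k.
Proof. by have := Ap_mono R p b c 0 k (leq0n k). Qed.

Lemma Ap_tail (R : realType) p b c k d :
  Ap R p b c (k + d) + 2 / pw R p b (k + d).+1 <= Ap R p b c k + 2 / pw R p b k.+1.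
Proof.
elim: d => [|d IH]; first by rewrite addn0.
apply: le_trans IH; rewrite addnS /=.
have h1 := inv_pw2 R p b (k + d).+1.
have h2 : (colI p (k + d).+1 == c)%:R / pw R p b (k + d).+1 <= 1 / pw R p b (k+d).+1.
  by rewrite ler_pM2r ?invr_gt0 ?pw_gt0 //; case: eqP.
have h3 : 1 / pw R p b (k+d).+1 + 1 / pw R p b (k+d).+1 = 2 / pw R p b (k + d).+1.
  by rewrite -mulrDl.
lra.
Qed.

Lemma Ap_ub (R : realType) p b c k l : Ap R p b c l <= Ap R p b c k + 2 / pw R p b k.+1.
Proof.
have hp : 0 <= 2 / pw R p b k.+1 by rewrite divr_ge0 // ltW // pw_gt0.
case: (leqP l k) => hlk.
  by rewrite (le_trans (Ap_mono R p b c _ _ hlk)) // lerDl.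
have := Ap_tail R p b c k (l - k); rewrite subnKC; last exact: ltnW.
by apply: le_trans; rewrite lerDl divr_ge0 // ltW // pw_gt0.
Qed.

Lemma alpha_lb (R : realType) p b c k : Ap R p b c k <= alpha R p b c.
Proof.
apply: ub_le_sup; last by exists k.
by exists (Ap R p b c 0 + 2 / pw R p b 1) => _ [l _ <-]; apply: Ap_ub.
Qed.

Lemma alpha_ub (R : realType) p b c k : alpha R p b c <= Ap R p b c k + 2 / pw R p b k.+1.
Proof.
apply: ge_sup; first by exists (Ap R p b c 0), 0%N.
by move=> _ [l _ <-]; apply: Ap_ub.
Qed.

Lemma Ap_const (R : realType) p b c k l : (k <= l)%N ->
  (forall i, (k < i <= l)%N -> colI p i != c) -> Ap R p b c l = Ap R p b c k.
Proof.
move=> /subnKC <-; elim: (l - k)%N => [|d IH] H; first by rewrite addn0.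
rewrite addnS /= IH; last by move=> i /andP[h1 h2]; apply: H; rewrite h1 addnS ltnW.
rewrite (negbTE (H _ _)) ?mul0r ?addr0 //.
by rewrite addnS ltnS leq_addr leqnn.
Qed.


Fixpoint Qv p (b : nat -> bool) (m : 'I_p.+4 -> int) (k : nat) : int :=
  if k is k'.+1 then Qv p b m k' * (2 ^ (ee p b k'.+1 - ee p b k'))%N%:Z + m (lift ord0 (colI p k'.+1))
  else m ord0.

Definition Lf (R : realType) p (a : 'I_p.+3 -> R) (m : 'I_p.+4 -> int) : R :=
  (m ord0)%:~R + \sum_(j < p.+3) (m (lift ord0 j))%:~R * a j.

Arguments Lf {R p}.

Lemma zetaE (R : realType) p (a : 'I_p.+3 -> R) m : zeta a m = `|Lf a m|.
Proof. by []. Qed.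

Lemma natz_R (R : realType) (n : nat) : (n%:Z)%:~R = n%:R :> R.
Proof. by []. Qed.

Lemma Q_id (R : realType) p b m k :
  (Qv p b m k)%:~R / pw R p b k = Lf (fun c => Ap R p b c k) m.
Proof.
elim: k => [|k IH].
  rewrite /Lf /pw /= expr0 divr1 big1 ?addr0 // => c _; exact: mulr0.
rewrite /Lf /= in IH *.
under eq_bigr do rewrite mulrDr.
rewrite big_split /= addrA -IH.
rewrite (bigD1 (colI p k.+1)) //= eqxx big1 ?addr0; last first.
  by move=> c /negbTE; rewrite eq_sym => ->; rewrite mul0r mulr0.
rewrite intrD intrM natz_R natrX pwS.
have h1 := pw_gt0 R p b k.
have h2 : (2 : R) ^+ (ee p b k.+1 - ee p b k) != 0 by rewrite gt_eqF // exprn_gt0.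
rewrite -[(2 * ee p b k + p + 6 + b k)%N]/(ee p b k.+1).
move: (pw R p b k) (2 ^+ _ : R) h1 h2 => P D h1 h2.
rewrite [true%:R]/= ; field.
by rewrite h2 gt_eqF.
Qed.

Lemma L_split (R : realType) p b m k :
  Lf (alpha R p b) m = (Qv p b m k)%:~R / pw R p b k +
    \sum_(j < p.+3) (m (lift ord0 j))%:~R * (alpha R p b j - Ap R p b j k).
Proof.
rewrite Q_id /Lf -addrA; congr (_ + _); rewrite -big_split /=.
by apply: eq_bigr => j _; rewrite -mulrDr addrC subrK.
Qed.

Lemma absm_le (p : nat) (m : 'I_p.+4 -> int) i : (`|m i|%N <= supnorm m)%N.
Proof. rewrite /supnorm; exact: (@leq_bigmax _ (fun j => `|m j|%N) i). Qed.

Lemma absm_leR (R : realType) p (m : 'I_p.+4 -> int) i : `|(m i)%:~R : R| <= (supnorm m)%:R.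
Proof. by rewrite -intr_norm -natr_absz ler_nat absm_le. Qed.

Lemma err_bound (R : realType) p b m k :
  `|\sum_(j < p.+3) (m (lift ord0 j))%:~R * (alpha R p b j - Ap R p b j k)|
    <= (p.+3)%:R * (supnorm m)%:R * (2 / pw R p b k.+1).
Proof.
apply: le_trans (ler_norm_sum _ _ _) _.
rewrite -mulrA (_ : (p.+3)%:R * _ = \sum_(j < p.+3) ((supnorm m)%:R * (2 / pw R p b k.+1))); last first.
  by rewrite sumr_const card_ord mulr_natl.
apply: ler_sum => j _; rewrite normrM; apply: ler_pM => //; first exact: absm_leR.
have h1 := alpha_lb R p b j k; have h2 := alpha_ub R p b j k.
rewrite ger0_norm; last by rewrite subr_ge0.
by rewrite lerBlDl.
Qed.

Lemma aux_le (R : realType) (X a a' : R) : 0 < a -> 0 < a' -> 4 * X * a <= a' ->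
  X * (2 / a') <= 1 / (2 * a).
Proof.
move=> ha ha' h.
have hc : 0 < 1 / (2 * a * a') by rewrite divr_gt0 // !mulr_gt0.
rewrite (_ : X * (2 / a') = (4 * X * a) * (1 / (2 * a * a'))); last by field; rewrite !gt_eqF.
rewrite (_ : 1 / (2 * a) = a' * (1 / (2 * a * a'))); last by field; rewrite !gt_eqF.
by rewrite ler_pM2r.
Qed.

Lemma aux_lt (R : realType) (X a a' : R) : 0 < a -> 0 < a' -> 4 * X * a < a' ->
  X * (2 / a') < 1 / (2 * a).
Proof.
move=> ha ha' h.
have hc : 0 < 1 / (2 * a * a') by rewrite divr_gt0 // !mulr_gt0.
rewrite (_ : X * (2 / a') = (4 * X * a) * (1 / (2 * a * a'))); last by field; rewrite !gt_eqF.
rewrite (_ : 1 / (2 * a) = a' * (1 / (2 * a * a'))); last by field; rewrite !gt_eqF.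
by rewrite ltr_pM2r.
Qed.

Lemma lower (R : realType) p b m s : Qv p b m s != 0 -> (supnorm m < 2 ^ ee p b s)%N ->
  1 / (2 * pw R p b s) <= zeta (alpha R p b) m.
Proof.
move=> hQ hmu; rewrite zetaE (L_split _ _ _ _ s).
have hE := err_bound R p b m s.
set E := \sum_(j < _) _ in hE *.
have hk := ltnW (ee_key hmu).
have hkR : 4 * ((p.+3)%:R * (supnorm m)%:R) * pw R p b s <= pw R p b s.+1.
  by move: hk; rewrite -(ler_nat R) !natrM !natrX /pw !mulrA.
have h1 := @aux_le R _ _ _ (pw_gt0 R p b s) (pw_gt0 R p b s.+1) hkR.
have hQ1 : 1 / pw R p b s <= `|(Qv p b m s)%:~R / pw R p b s|.
  rewrite normrM normfV (gtr0_norm (pw_gt0 _ _ _ _)) ler_pM2r ?invr_gt0 ?pw_gt0 //.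
  by rewrite -intr_norm ler1z -gtz0_ge1 normr_gt0.
have h2 := lerB_normD ((Qv p b m s)%:~R / pw R p b s) E.
have h3 : 1 / pw R p b s = 2 * (1 / (2 * pw R p b s)).
  by field; rewrite gt_eqF // pw_gt0.
rewrite mulrA in h1.
lra.
Qed.


Definition uvec p (c : 'I_p.+3) : 'I_p.+4 -> int := fun i => (i == lift ord0 c)%:Z.
Definition comp p b (c : 'I_p.+3) K : 'I_p.+4 -> int :=
  fun i => if i == ord0 then - Qv p b (uvec p c) K else (2 ^ ee p b K)%N%:Z * uvec p c i.

Lemma ord0_lift p (c : 'I_p.+3) : (ord0 == lift ord0 c :> 'I_p.+4) = false.
Proof. exact: negbTE (neq_lift _ _). Qed.

Lemma lift_ord0 p (c : 'I_p.+3) : (lift ord0 c == ord0 :> 'I_p.+4) = false.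
Proof. by rewrite eq_sym ord0_lift. Qed.

Lemma Qu_eq (R : realType) p b c K : (Qv p b (uvec p c) K)%:~R = pw R p b K * Ap R p b c K.
Proof.
have := Q_id R p b (uvec p c) K; rewrite /Lf /uvec.
rewrite (bigD1 c) //= eqxx big1 ?addr0 => [|j /negbTE hj]; last by rewrite (inj_eq lift_inj) hj mul0r.
move=> E; have h := pw_gt0 R p b K.
rewrite (_ : 0%Z%:~R + true%:~R * Ap R p b c K = Ap R p b c K) in E; last by rewrite mulr1z add0r mul1r.
rewrite -E; field; by rewrite gt_eqF.
Qed.

Lemma Lf_comp (R : realType) p b c K :
  Lf (alpha R p b) (comp p b c K) = pw R p b K * (alpha R p b c - Ap R p b c K).
Proof.
rewrite /Lf /comp eqxx intrN Qu_eq (bigD1 c) //= big1 ?addr0 => [|j /negbTE hj]; last first.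
  by rewrite /uvec (inj_eq lift_inj) hj mulr0 mul0r.
rewrite /uvec eqxx mulr1 natz_R natrX /pw; ring.
Qed.

Lemma Ap_le1 (R : realType) p b c K : Ap R p b c K <= 1.
Proof.
apply: le_trans (Ap_ub R p b c 0 K) _.
have h := pw2 R p b 0; have h1 := pw_gt0 R p b 1.
rewrite /= add0r ler_pdivrMr // mul1r; move: h; rewrite /pw expr0 mulr1 //.
Qed.

Lemma supnorm_comp (R : realType) p b c K : (supnorm (comp p b c K) <= 2 ^ ee p b K)%N.
Proof.
apply/bigmax_leqP => i _; rewrite /comp.
case: eqP => _.
  have h1 : ((Qv p b (uvec p c) K)%:~R : R) = pw R p b K * Ap R p b c K := Qu_eq _ _ _ _ _.
  have h2 : 0 <= Qv p b (uvec p c) K.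
    by rewrite -(ler0z R) h1 mulr_ge0 // ?Ap_ge0 // ltW // pw_gt0.
  have h3 : Qv p b (uvec p c) K <= (2 ^ ee p b K)%N.
    by rewrite -(ler_int R) h1 natz_R natrX -[X in _ <= X]mulr1 ler_pM2l ?pw_gt0 ?Ap_le1 //.
  rewrite abszN; lia.
rewrite /uvec; case: (i == _); rewrite ?mulr1 ?mulr0 //.
Qed.

Lemma competitor (R : realType) p b c K s mu : (2 ^ ee p b K <= mu)%N -> (mu < 2 ^ ee p b s)%N ->
  (K <= s)%N -> (forall i, (K < i <= s)%N -> colI p i != c) ->
  [/\ zeta (alpha R p b) (comp p b c K) < 1 / (2 * pw R p b s),
      nonzero_vec (comp p b c K) & (supnorm (comp p b c K) <= mu)%N].
Proof.
move=> hK hs hKs hc; split.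
- rewrite zetaE Lf_comp -(Ap_const R p b c K s hKs hc).
  have h1 := alpha_lb R p b c s; have h2 := alpha_ub R p b c s.
  have hpK := pw_gt0 R p b K.
  rewrite ger0_norm; last by rewrite mulr_ge0 ?subr_ge0 // ltW.
  have hkey : (4 * mu * 2 ^ ee p b s < 2 ^ ee p b s.+1)%N.
    have := ee_key hs; set X := (2 ^ ee p b s)%N; set Y := (2 ^ ee p b s.+1)%N.
    move=> H; apply: leq_ltn_trans H; rewrite -!mulnA leq_mul2l /= mulnA leq_mul2r.
    by rewrite leq_pmull ?orbT.
  have hkR : 4 * mu%:R * pw R p b s < pw R p b s.+1.
    by move: hkey; rewrite -(ltr_nat R) !natrM !natrX /pw.
  have h3 := @aux_lt R _ _ _ (pw_gt0 R p b s) (pw_gt0 R p b s.+1) hkR.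
  have hKR : pw R p b K <= mu%:R by move: hK; rewrite -(ler_nat R) natrX.
  apply: le_lt_trans h3.
  apply: ler_pM => //; first exact: ltW.
  by rewrite subr_ge0.
  by rewrite lerBlDl.
- exists (lift ord0 c); rewrite /comp lift_ord0 /uvec eqxx mulr1.
  have := expn_gt0 2 (ee p b K); lia.
- exact: leq_trans (supnorm_comp R p b c K) hK.
Qed.


Lemma colI_eq p i (c : 'I_p.+3) : (colI p i == c) = (colN p i == c).
Proof. by rewrite -val_eqE /= colI_val. Qed.

Lemma QvS p b m i : Qv p b m i.+1 = Qv p b m i * (2 ^ (ee p b i.+1 - ee p b i))%N%:Z + m (lift ord0 (colI p i.+1)).
Proof. by []. Qed.

Lemma not_best (R : realType) p b (m : 'I_p.+4 -> int) (j : 'I_p.+3) : (2 <= j)%N -> m (lift ord0 j) != 0 ->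
  ~ best_approx (alpha R p b) m.
Proof.
move=> hj hmj [_ hbest].
set mu := supnorm m.
have hmu1 : (1 <= mu)%N by have := absm_le _ m (lift ord0 j); rewrite -/mu; lia.
have hk0 : exists k, (mu < 2 ^ ee p b k)%N.
  exists mu; apply: leq_trans (ltn_expl mu (ltnSn 1)) _; rewrite leq_exp2l //; exact: ee_ge.
have [k hk kmin] := ex_minnP hk0.
have k0 : k != 0%N by apply/eqP => E; move: hk; rewrite E /=; lia.
set K := k.-1.
have hKk : K.+1 = k by rewrite /K prednK // lt0n.
have hK : (2 ^ ee p b K <= mu)%N.
  rewrite leqNgt; apply/negP => /kmin; rewrite -hKk; lia.
have [i0 [hi0 ci0]] := @colN_P1 p j K.+1 (ltn_ord j).
have hs0 : exists s, (K.+1 <= s)%N && (Qv p b m s != 0).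
  case: (boolP (Qv p b m i0 == 0)) => [/eqP Q0|Q0]; last by exists i0; rewrite Q0 ltnW.
  exists i0.-1; rewrite -ltnS prednK; last by lia.
  rewrite hi0 /=; apply/negP => /eqP Q1.
  move: Q0; rewrite -[i0]prednK; last by lia.
  rewrite QvS Q1 mul0r add0r prednK; last by lia.
  have -> : colI p i0 = j by apply/eqP; rewrite colI_eq ci0.
  by move/eqP; rewrite (negbTE hmj).
have [s /andP[hs1 hs2] smin] := ex_minnP hs0.
have hmus : (mu < 2 ^ ee p b s)%N.
  apply: leq_trans (_ : 2 ^ ee p b K.+1 <= _)%N; first by rewrite hKk.
  by rewrite leq_exp2l // ee_mono.
have hlow := lower R p b m s hs2 hmus.
have [c hc] : exists c : 'I_p.+3, forall i, (K < i <= s)%N -> colI p i != c.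
  case: (pselect (exists i, (K < i <= s)%N /\ colN p i = 0%N)) => [[i1 [hi1 c1]]|H0]; last first.
    exists (inord 0) => i hi; rewrite colI_eq inordK //; apply/negP => /eqP E.
    by apply: H0; exists i.
  case: (pselect (exists i, (K < i <= s)%N /\ colN p i = 1%N)) => [[i2 [hi2 c2]]|H1]; last first.
    exists (inord 1) => i hi; rewrite colI_eq inordK //; apply/negP => /eqP E.
    by apply: H1; exists i.
  exfalso.
  have hjj : (2 <= j < p.+3)%N by rewrite hj ltn_ord.
  have [i [hi ci]] := colN_P2 (ltn0Sn K) hi1 hi2 c1 c2 hjj.
  have Qi : Qv p b m i = 0.
    apply/eqP; apply: contraT => H; have := smin i; rewrite H andbT.
    move: hi => /andP[h1 h2]; rewrite ltnW //= => /(_ isT); lia.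
  have Qi1 : Qv p b m i.-1 = 0.
    apply/eqP; apply: contraT => H; have := smin i.-1; rewrite H andbT.
    move: hi => /andP[h1 h2]; have -> : (K < i.-1)%N by lia.
    move=> /(_ isT); lia.
  move: Qi; rewrite -[i]prednK; last by move: hi => /andP[h1 h2]; lia.
  rewrite QvS Qi1 mul0r add0r prednK; last by move: hi => /andP[h1 h2]; lia.
  have -> : colI p i = j by apply/eqP; rewrite colI_eq ci.
  by move/eqP; rewrite (negbTE hmj).
have hKs : (K <= s)%N by lia.
have [hz hnz hsn] := @competitor R p b c K s mu hK hmus hKs hc.
have := hbest _ hnz hsn.
move=> H; have := lt_le_trans hz hlow; rewrite ltNge H //.
Qed.


Lemma Qv_zero p b (m : 'I_p.+4 -> int) : (forall c, m (lift ord0 c) = 0) ->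
  forall k, Qv p b m k = m ord0 * (2 ^ ee p b k)%N%:Z.
Proof.
move=> H; elim=> [|k IH]; first by rewrite /= mulr1.
rewrite QvS IH H addr0 -mulrA -PoszM -expnD subnKC //; exact/ltnW/ee_lt.
Qed.

Lemma m_eq0 p (m : 'I_p.+4 -> int) : m ord0 = 0 -> (forall c, m (lift ord0 c) = 0) -> forall i, m i = 0.
Proof. by move=> h0 h i; case: (unliftP ord0 i) => [c ->|->]. Qed.

Lemma exists_Q p b (m : 'I_p.+4 -> int) : (exists i, m i != 0) ->
  exists s, (Qv p b m s != 0) && (supnorm m < 2 ^ ee p b s)%N.
Proof.
move=> [i0 hi0]; set t := supnorm m.
have ht : forall s, (t <= s)%N -> (supnorm m < 2 ^ ee p b s)%N.
  move=> s hs; have h1 : (s < 2 ^ s)%N := ltn_expl s (ltnSn 1).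
  have h2 : (2 ^ s <= 2 ^ ee p b s)%N by rewrite leq_exp2l // ee_ge.
  rewrite -/t; lia.
apply: contrapT => Hn.
have HQ : forall s, (t <= s)%N -> Qv p b m s = 0.
  move=> s hs; apply/eqP; apply: contrapT => hq; apply: Hn; exists s.
  by rewrite ht // andbT; apply/negP.
have Hc : forall c, m (lift ord0 c) = 0.
  move=> c; have [i [hi ci]] := @colN_P1 p c t (ltn_ord c).
  have Qi := HQ i (ltnW hi); have Qi1 : Qv p b m i.-1 = 0 by apply: HQ; lia.
  move: Qi; rewrite -[i]prednK; last by lia.
  rewrite QvS Qi1 mul0r add0r prednK; last by lia.
  by have -> : colI p i = c by apply/eqP; rewrite colI_eq ci.
have := HQ t (leqnn t); rewrite Qv_zero // => /eqP; rewrite mulf_eq0 => /orP[/eqP h0|].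
  by move: hi0; rewrite m_eq0.
by rewrite eqz_nat expn_eq0.
Qed.

Lemma Lf_zero_imp (R : realType) p b (m : 'I_p.+4 -> int) :
  Lf (alpha R p b) m = 0 -> forall i, m i = 0.
Proof.
move=> hL i; apply/eqP; apply: contrapT => /negP hi.
have [s /andP[h1 h2]] := exists_Q p b m (ex_intro _ i hi).
have := lower R p b m s h1 h2; rewrite zetaE hL normr0.
have := pw_gt0 R p b s => hp.
have : 0 < 1 / (2 * pw R p b s) by rewrite divr_gt0 // mulr_gt0.
lra.
Qed.

Lemma Qindep (R : realType) p b : Q_lin_indep1 (alpha R p b).
Proof.
move=> q hq.
set D := \prod_(k < p.+4) denq (q k).
pose Dk k := \prod_(l < p.+4 | l != k) denq (q l).
pose m := fun k : 'I_p.+4 => numq (q k) * Dk k.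
have hm : forall k, (m k)%:~R = ratr (q k) * D%:~R :> R.
  move=> k.
  have hq' : (m k)%:~R = q k * D%:~R :> rat.
    rewrite /m /D (bigD1 k) //= intrM numqE intrM mulrA.
    by [].
  by rewrite -(ratr_int R (m k)) hq' (fst (ratr_is_multiplicative R)) ratr_int.
have hL : Lf (alpha R p b) m = 0.
  rewrite /Lf hm; under eq_bigr do rewrite hm.
  rewrite (_ : \sum_(i < p.+3) _ = D%:~R * \sum_(i < p.+3) ratr (q (lift ord0 i)) * alpha R p b i).
    by rewrite mulrC -mulrDr hq mulr0.
  by rewrite mulr_sumr; apply: eq_bigr => i _; ring.
move=> i; have := Lf_zero_imp R p b m hL i; rewrite /m => /eqP.
rewrite mulf_eq0 numq_eq0 => /orP[/eqP //|].
by rewrite gt_eqF // prodr_gt0 // => l _; rewrite denq_gt0.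
Qed.


Definition bvec p : 'I_3 -> 'I_p.+4 -> int := fun l i => ((l : nat) == i)%:Z.

Lemma sum3 (F : 'I_3 -> int) : \sum_(l < 3) F l = F (inord 0) + F (inord 1) + F (inord 2).
Proof.
rewrite !big_ord_recr big_ord0 /= add0r; congr (F _ + F _ + F _); apply: val_inj => /=;
  by rewrite inordK.
Qed.

Lemma bvec_indep p : Z_lin_indep (bvec p).
Proof.
move=> a H l; have := H (inord l); rewrite sum3 /bvec inordK; last by have := ltn_ord l; lia.
case: l => [[|[|[|l]]] hl] //=.
- by rewrite !inordK //= mulr1 !mulr0 !addr0 => <-; congr a; apply: val_inj; rewrite /= inordK.
- by rewrite !inordK //= mulr1 !mulr0 add0r addr0 => <-; congr a; apply: val_inj; rewrite /= inordK.
- by rewrite !inordK //= mulr1 !mulr0 !add0r => <-; congr a; apply: val_inj; rewrite /= inordK.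
Qed.

Lemma lattice_of p (m : 'I_p.+4 -> int) :
  (forall c : 'I_p.+3, (2 <= c)%N -> m (lift ord0 c) = 0) -> in_lattice (bvec p) m.
Proof.
move=> H; exists (fun l : 'I_3 => m (inord l)) => i.
rewrite sum3 /bvec !inordK //.
case: i => [[|[|[|i]]] hi] /=.
- by rewrite mulr1 !mulr0 !addr0; congr m; apply: val_inj; rewrite /= inordK.
- by rewrite mulr1 !mulr0 add0r addr0; congr m; apply: val_inj; rewrite /= inordK.
- by rewrite mulr1 !mulr0 !add0r; congr m; apply: val_inj; rewrite /= inordK.
rewrite !mulr0 !addr0.
have hc : (i.+2 < p.+3)%N by [].
have -> : Ordinal hi = lift ord0 (Ordinal hc) by apply: val_inj.
by rewrite H.
Qed.

Lemma best_in_lattice (R : realType) p b (m : 'I_p.+4 -> int) :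
  best_approx (alpha R p b) m -> in_lattice (bvec p) m.
Proof.
move=> hb; apply: lattice_of => c hc; apply/eqP; apply: contrapT => /negP hm.
exact: (@not_best R p b m c hc hm hb).
Qed.


Lemma ee_agree p b b' i : (forall n, (n < i)%N -> b n = b' n) ->
  forall k, (k <= i)%N -> ee p b k = ee p b' k.
Proof. move=> H; elim=> [//|k IH] hk; rewrite !eeS IH ?H //; exact: ltnW. Qed.

Lemma Ap_agree (R : realType) p b b' c i : (forall k, (k <= i)%N -> ee p b k = ee p b' k) ->
  forall k, (k <= i)%N -> Ap R p b c k = Ap R p b' c k.
Proof. move=> H; elim=> [//|k IH] hk /=; rewrite IH ?(ltnW hk) // /pw H //. Qed.

Lemma pw4 (R : realType) p b k : 4 * pw R p b k <= pw R p b k.+1.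
Proof.
rewrite pwS mulrC ler_pM2l ?pw_gt0 //.
have h : (2 <= ee p b k.+1 - ee p b k)%N by rewrite eeS; lia.
rewrite (_ : 4 = 2 ^+ 2); last by rewrite expr2; lra.
by rewrite ler_eXn2l // ltr1n.
Qed.

Lemma sep (R : realType) p b b' i : (forall k, (k <= i)%N -> ee p b k = ee p b' k) ->
  b i = false -> b' i = true ->
  alpha R p b (colI p i.+1) != alpha R p b' (colI p i.+1).
Proof.
move=> H bi bi'; set c := colI p i.+1.
have hA := Ap_agree R p b b' c i H i (leqnn i).
have hee : ee p b' i.+1 = (ee p b i.+1).+1.
  rewrite !eeS bi bi' (H i (leqnn i)) /=; lia.
have h1 := alpha_lb R p b c i.+1; rewrite /= eqxx in h1.
have h2 := alpha_ub R p b' c i.+1; rewrite /= eqxx -hA in h2.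
have ht : true%:R = 1 :> R by [].
rewrite ht in h1 h2.
have hP := pw_gt0 R p b i.+1.
have hP' : pw R p b' i.+1 = 2 * pw R p b i.+1 by rewrite /pw hee exprS.
have h4 := pw4 R p b' i.+1.
rewrite hP' in h2 h4.
set P := pw R p b i.+1 in hP h1 h2 h4.
set Q := pw R p b' i.+2 in h2 h4.
have hQ : 0 < Q by apply: lt_le_trans h4; rewrite !mulr_gt0.
have e1 : 1 / (2 * P) = (1 / P) / 2 by field; rewrite gt_eqF.
have e2 : 2 / Q <= (1 / P) / 4.
  rewrite ler_pdivrMr // mulrAC ler_pdivlMr; last by lra.
  by rewrite mul1r [_^-1 * _]mulrC ler_pdivlMr //; lra.
have : 0 < 1 / P by rewrite divr_gt0.
rewrite e1 in h2.
move=> hp; apply/eqP => E; rewrite -E in h2.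
lra.
Qed.

Lemma alpha_inj (R : realType) p : injective (alpha R p).
Proof.
move=> b b' E; apply/funext => n; apply/eqP/negPn/negP => hn.
have ex : exists n, b n != b' n by exists n.
have [i hi imin] := ex_minnP ex.
have Hlt : forall k, (k < i)%N -> b k = b' k.
  move=> k hk; apply/eqP; apply: contrapT => /negP hk'.
  by have := imin k hk'; rewrite leqNgt hk.
have H := ee_agree p b b' i Hlt.
case hb : (b i); case hb' : (b' i); rewrite hb hb' in hi => //.
- have H' : forall k, (k <= i)%N -> ee p b' k = ee p b k by move=> k hk; rewrite H.
  by have := sep R p b' b i H' hb' hb; rewrite E eqxx.
- by have := sep R p b b' i H hb hb'; rewrite E eqxx.
Qed.

Lemma not_countable_inj (T : Type) (F : (nat -> bool) -> T) : injective F -> ~ countable (range F).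
Proof.
move=> hF /countable_injP [f hf].
have hg : injective (f \o F).
  move=> x1 y1 /= E; apply: hF; apply: hf => //; rewrite inE; [by exists x1 | by exists y1].
pose h n : nat -> bool := match pselect (exists x, f (F x) = n) with
  | left H => projT1 (cid H) | right _ => fun _ => false end.
have hh : forall x, h (f (F x)) = x.
  move=> x; rewrite /h; case: pselect => [H|H]; last by exfalso; apply: H; exists x.
  by case: (cid H) => y hy /=; apply: hg.
pose d n := ~~ h n n.
set n := f (F d).
have E : h n n = d n by rewrite /n hh.
by move: E; rewrite /d; case: (h n n).
Qed.


Local Open Scope classical_set_scope.

Theorem theorem1p3 (R : realType) (r : nat) (hr : (3 <= r)%N) :
  exists S : set ('I_r -> R),
    ~ countable S /\
    forall alpha, S alpha ->
      Q_lin_indep1 alpha /\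
      exists b : 'I_3 -> 'I_r.+1 -> int,
        Z_lin_indep b /\
        finite_set [set m | best_approx alpha m /\ ~ in_lattice b m].
Proof.
case: r hr => [|[|[|p]]] // _.
exists (range (alpha R p)); split.
  exact: not_countable_inj (alpha_inj R p).
move=> a [b _ <-]; split; first exact: Qindep.
exists (bvec p); split; first exact: bvec_indep.
rewrite (_ : [set m | _] = set0); first exact: finite_set0.
apply/seteqP; split => m // [hb hn]; exfalso; apply: hn; exact: best_in_lattice hb.
Qed.
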